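(* Let $P$ and $R$ be complex vector spaces with $\dim P=3$, $\dim R=h$, $R$ carrying a non-degenerate symmetric bilinear form identifying $R\cong R^\vee$. Let $E\subset\mathrm{Hom}(P,R)$ be a generic $h$-dimensional abelian subspace in general position. Then the linear equations defining the polar space $H(E)=\{v\in \mathrm{Hom}(P,R): \mathrm{span}\{E,v\}\text{ is abelian}\}$ have rank $2h$ (i.e. $H(E)$ has codimension $2h$ in $\mathrm{Hom}(P,R)$). Consequently $H(E)=E$, i.e. $E$ is a maximal abelian subspace.
   Context: A linear subspace $E\subset \mathrm{Hom}(P,R)$ is abelian if ${}^tA\,B-{}^tB\,A=0$ for all $A,B\in E$, transposes taken with respect to $R\cong R^\vee$. $E$ is in general position if for a general $u\in P$ the map $E\to R$, $A\mapsto A(u)$, is an isomorphism. Note $\dim \mathrm{Hom}(P,R)=3h$. *)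

(* Defs.v *)
From HB Require Import structures.
From mathcomp Require Import all_boot all_order all_algebra.
From mathcomp Require Import reals.
From mathcomp Require Import complex.
From mathcomp Require mpoly.
Set Implicit Arguments. Unset Strict Implicit. Unset Printing Implicit Defensive.
Import GRing.Theory Num.Theory.
Local Open Scope ring_scope.

(* P = F^3 (column vectors 'cV_3), R = F^h (column vectors 'cV_h).
   Hom(P,R) = 'M[F]_(h,3).  The non-degenerate symmetric bilinear form on R is
   (x,y) |-> x^T *m Q *m y with Q symmetric and invertible.
   For A, B in Hom(P,R), the composite  tA B : P -> P^v  is the bilinear form
   (u,w) |-> <A u, B w>_Q, i.e. the 3x3 matrix A^T *m Q *m B.
   A linear subspace E of Hom(P,R) is represented (mxalgebra-style) by a matrix
   whose rows span E, the elements of Hom(P,R) being identified with row vectors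
   of length h*3 via mxvec / vec_mx. *)

Section Defs.
Variable F : fieldType.
Variable h : nat.

Definition tcomp (Q : 'M[F]_h) (A B : 'M[F]_(h,3)) : 'M[F]_3 := A^T *m Q *m B.

Definition abelian_sub (Q : 'M[F]_h) m (E : 'M[F]_(m, h * 3)) : Prop :=
  forall a b : 'rV[F]_(h * 3), (a <= E)%MS -> (b <= E)%MS ->
    tcomp Q (vec_mx a) (vec_mx b) - tcomp Q (vec_mx b) (vec_mx a) = 0.

Definition eval_iso m (E : 'M[F]_(m, h * 3)) (u : 'cV[F]_3) : Prop :=
  (forall a : 'rV[F]_(h * 3), (a <= E)%MS -> vec_mx a *m u = 0 -> a = 0) /\
  (forall r : 'cV[F]_h, exists a : 'rV[F]_(h * 3), (a <= E)%MS /\ vec_mx a *m u = r).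

(* general position: for a general u in P the evaluation map is an isomorphism.
   The set of such u is the complement of the zero set of a polynomial in u
   (a determinant), hence it is a dense open set iff it is nonempty. *)
Definition general_position m (E : 'M[F]_(m, h * 3)) : Prop :=
  exists u : 'cV[F]_3, eval_iso E u.

Definition in_polar (Q : 'M[F]_h) m (E : 'M[F]_(m, h * 3)) (v : 'M[F]_(h,3)) : Prop :=
  abelian_sub Q (col_mx E (mxvec v)).

Definition polar_map (Q : 'M[F]_h) (E : 'M[F]_(h, h * 3)) (v : 'rV[F]_(h * 3))
  : 'rV[F]_(h * (3 * 3)) :=
  mxvec (\matrix_(i < h)
    mxvec (tcomp Q (vec_mx (row i E)) (vec_mx v) - tcomp Q (vec_mx v) (vec_mx (row i E)))).

Definition polar_eqs (Q : 'M[F]_h) (E : 'M[F]_(h, h * 3)) : 'M[F]_(h * 3, h * (3 * 3)) :=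
  lin1_mx (polar_map Q E).

(* coordinates of a basis matrix, used as variables for polynomials *)
Definition coords (E : 'M[F]_(h, h * 3)) : 'I_(h * (h * 3)) -> F :=
  fun k => mxvec E 0 k.

Definition abelian_gp_basis (Q : 'M[F]_h) (E : 'M[F]_(h, h * 3)) : Prop :=
  [/\ row_free E, abelian_sub Q E & general_position E].

End Defs.

(* Main.v *)
Require Import Defs.
From HB Require Import structures.
From mathcomp Require Import all_boot all_order all_algebra.
From mathcomp Require Import reals complex.
From mathcomp Require mpoly.
Import GRing.Theory Num.Theory.
Local Open Scope ring_scope.
From mathcomp Require Import zify.
Section Aux.
Variable F : fieldType.
Variable h : nat.
Implicit Types (Q : 'M[F]_h) (A B C : 'M[F]_(h,3)).

Definition comm Q A B := tcomp Q A B - tcomp Q B A.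

Lemma comm_linl Q B k A C : comm Q (k *: A + C) B = k *: comm Q A B + comm Q C B.
Proof.
rewrite /comm /tcomp linearD linearZ /= !mulmxDl !mulmxDr -!scalemxAl -!scalemxAr.
try rewrite -!scalemxAl.
by rewrite scalerBr opprD addrACA.
Qed.

Lemma comm_anti Q A B : comm Q A B = - comm Q B A.
Proof. by rewrite /comm opprB. Qed.

Lemma comm_linr Q A k B C : comm Q A (k *: B + C) = k *: comm Q A B + comm Q A C.
Proof. by rewrite comm_anti comm_linl opprD -scalerN -!comm_anti. Qed.

Lemma comm0l Q B : comm Q 0 B = 0.
Proof. by rewrite /comm /tcomp trmx0 !mul0mx mulmx0 subrr. Qed.

Lemma comm_span Q m (E : 'M[F]_(m, h*3)) B :
  (forall i, comm Q (vec_mx (row i E)) B = 0) ->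
  forall a, (a <= E)%MS -> comm Q (vec_mx a) B = 0.
Proof.
move=> H a /submxP [c ->]; rewrite mulmx_sum_row linear_sum /=.
elim/big_rec: _ => [|i x _ IH]; first by rewrite comm0l.
by rewrite linearZ /= comm_linl H IH scaler0 addr0.
Qed.

Lemma rV_mul_eq0 n (M : 'M[F]_(h, n)) : (forall r : 'cV[F]_h, r^T *m M = 0) -> M = 0.
Proof.
move=> H; apply/matrixP => i j; have := congr1 (fun X : 'M[F]_(1,n) => X ord0 j) (H (delta_mx i ord0)).
rewrite !mxE => <-; rewrite (bigD1 i) //= big1 ?addr0; last first.
  by move=> k /negbTE ki; rewrite !mxE ki mul0r.
by rewrite !mxE !eqxx mul1r.
Qed.
Lemma polar_sub Q m (E : 'M[F]_(m,h*3)) v : Q \in unitmx -> abelian_sub Q E ->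
  general_position E ->
  (forall a, (a <= E)%MS -> comm Q (vec_mx a) v = 0) -> (mxvec v <= E)%MS.
Proof.
move=> QU Hab [u [_ Hsurj]] Hv.
have [a0 [a0E a0u]] := Hsurj (v *m u).
pose w := v - vec_mx a0.
have wu : w *m u = 0 by rewrite mulmxBl a0u subrr.
have Hw : forall b, (b <= E)%MS -> comm Q (vec_mx b) w = 0.
  move=> b bE; rewrite /w -[v - _]addrC -scaleN1r comm_linr Hv // addr0.
  by have := Hab _ _ bE a0E; rewrite /comm => ->; rewrite scaler0.
have Qw : Q *m w = 0.
  apply: rV_mul_eq0 => r; have [b [bE bu]] := Hsurj r.
  have := congr1 (mulmx u^T) (Hw b bE); rewrite /comm /tcomp mulmx0 mulmxBr.
  rewrite !mulmxA -trmx_mul bu -mulmxA -trmx_mul wu trmx0 !mul0mx subr0.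
  by rewrite mulmxA.
have w0 : w = 0 by rewrite -(mulKmx QU w) Qw mulmx0.
have -> : v = vec_mx a0 by apply/eqP; rewrite -subr_eq0 -/w w0.
by rewrite vec_mxK.
Qed.
Lemma in_polarP Q (E : 'M[F]_(h,h*3)) v : Q \in unitmx -> abelian_sub Q E ->
  general_position E -> (in_polar Q E v <-> (mxvec v <= E)%MS).
Proof.
move=> QU Hab Hgp; split.
  move=> Hp; apply: (@polar_sub Q _ E v QU Hab Hgp) => a aE.
  have sE : (E <= col_mx E (mxvec v))%MS by rewrite -addsmxE addsmxSl.
  have sv : (mxvec v <= col_mx E (mxvec v))%MS by rewrite -addsmxE addsmxSr.
  by have := Hp a _ (submx_trans aE sE) sv; rewrite mxvecK.
move=> vE a b aE bE; apply: Hab.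
  by apply: submx_trans aE _; rewrite col_mx_sub submx_refl vE.
by apply: submx_trans bE _; rewrite col_mx_sub submx_refl vE.
Qed.

Section PM.
Variables (Q : 'M[F]_h) (E : 'M[F]_(h,h*3)).
Lemma pm_lin : linear (polar_map Q E).
Proof.
move=> k x y; rewrite /polar_map -linearP /=; congr mxvec.
apply/row_matrixP => i; rewrite linearP /= !rowK linearP /=.
rewrite !rowK -!/(comm Q _ _) comm_linr linearP.
by [].
Qed.
HB.instance Definition _ := GRing.isLinear.Build F 'rV[F]_(h*3) 'rV[F]_(h*(3*3)) *:%R (polar_map Q E) pm_lin.

Lemma pm_mul a : a *m polar_eqs Q E = polar_map Q E a.
Proof. exact: mul_rV_lin1. Qed.

Lemma pm_ker a : (a <= kermx (polar_eqs Q E))%MS = 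
  [forall i, comm Q (vec_mx (row i E)) (vec_mx a) == 0].
Proof.
rewrite sub_kermx pm_mul /polar_map mxvec_eq0.
apply/eqP/forallP => [H i|H]; first by have := congr1 (row i) H; rewrite rowK row0 => /eqP; rewrite mxvec_eq0.
by apply/row_matrixP => i; rewrite rowK row0; apply/eqP; rewrite mxvec_eq0; apply: H.
Qed.
End PM.
Lemma rank_polar Q (E : 'M[F]_(h,h*3)) : Q \in unitmx -> abelian_gp_basis Q E ->
  \rank (polar_eqs Q E) = (2 * h)%N.
Proof.
move=> QU [rf Hab Hgp].
have key : forall a : 'rV[F]_(h*3), (a <= kermx (polar_eqs Q E))%MS = (a <= E)%MS.
  move=> a; rewrite (pm_ker Q E a); apply/forallP/idP => [H|aE i].
    rewrite -(vec_mxK a); apply: (@polar_sub Q _ E _ QU Hab Hgp).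
    by apply: comm_span => i; apply/eqP; apply: H.
  by apply/eqP; apply: Hab => //; apply: row_sub.
have e1 : \rank (kermx (polar_eqs Q E)) = \rank E.
  apply/eqP; rewrite eqn_leq; apply/andP; split; apply: mxrankS; apply/row_subP => i.
    by rewrite -key row_sub.
  by rewrite key row_sub.
move: e1; rewrite mxrank_ker (eqP rf).
have := rank_leq_row (polar_eqs Q E); lia.
Qed.
End Aux.
Local Open Scope complex_scope.
Theorem proposition3p24 (R : realType) (h : nat) (Q : 'M[R[i]]_h) :
  Q^T = Q -> Q \in unitmx ->
  forall p : mpoly.mpoly (h * (h * 3)) R[i],
    (forall E : 'M[R[i]]_(h, h * 3),
        abelian_gp_basis Q E ->
        \rank (polar_eqs Q E) = (2 * h)%N ->
        (forall v : 'M[R[i]]_(h, 3), in_polar Q E v <-> (mxvec v <= E)%MS) ->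
        mpoly.meval (coords E) p = 0) ->
    forall E : 'M[R[i]]_(h, h * 3),
      abelian_gp_basis Q E -> mpoly.meval (coords E) p = 0.
Proof.
move=> _ QU p Hp E HE.
have Hr := @rank_polar _ _ Q E QU HE.
case: (HE) => _ Hab Hgp.
exact: (Hp E HE Hr (fun v => @in_polarP _ _ Q E v QU Hab Hgp)).
Qed.
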